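(* Let $A$ be an orientable surface group, $p$ a prime, and $\mathcal{S}$ a directed set of normal subgroups of $p$-power index in $A$ such that $\varprojlim_{U\in\mathcal{S}}H_1(U,\mathbb{F}_p)=0$ (transition maps induced by inclusions). Then the completion $\overline{A}=\varprojlim_{U\in\mathcal{S}}A/U$ is isomorphic (via the natural epimorphism $\widehat{A}_p\to\overline{A}$) to the pro-$p$ completion $\widehat{A}_p$.
   Context: An orientable surface group is the fundamental group of a closed orientable surface of genus $\ge1$. A set of subgroups is directed if any two contain a common member. *)

(* Defs.v *)
From mathcomp Require Import all_boot.
Set Implicit Arguments. Unset Strict Implicit. Unset Printing Implicit Defensive.

Record group := Group {
  carrier :> Type;
  gmul : carrier -> carrier -> carrier;
  gone : carrier;
  ginv : carrier -> carrier;
  gmulA : forall x y z, gmul x (gmul y z) = gmul (gmul x y) z;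
  gmul1 : forall x, gmul gone x = x;
  gmulV : forall x, gmul (ginv x) x = gone }.

Section Groups.
Variable G : group.
Local Notation "x * y" := (gmul x y).

Definition gpow (x : G) (n : nat) : G := iter n (fun y => y * x) (gone G).
Definition gcomm (x y : G) : G := ginv x * ginv y * x * y.

Definition is_subgroup (H : G -> Prop) : Prop :=
  H (gone G) /\ (forall x y, H x -> H y -> H (x * y)) /\ (forall x, H x -> H (ginv x)).

Definition is_normal (H : G -> Prop) : Prop :=
  is_subgroup H /\ forall g x, H x -> H (ginv g * x * g).

Definition subset (V U : G -> Prop) : Prop := forall x, V x -> U x.

Definition gen (X : G -> Prop) (x : G) : Prop :=
  forall H, is_subgroup H -> subset X H -> H x.

(* Phi_p(U) = U^p [U,U]; H_1(U, F_p) = U / Phi_p(U) *)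
Definition PhiP (p : nat) (U : G -> Prop) : G -> Prop :=
  gen (fun y => (exists u, U u /\ y = gpow u p) \/
                (exists u v, U u /\ U v /\ y = gcomm u v)).

(* U has index p^k for some k: a complete irredundant system of p^k coset reps *)
Definition p_power_index (p : nat) (U : G -> Prop) : Prop :=
  exists k, exists r : 'I_(p ^ k) -> G,
    forall x, exists! i, U (x * ginv (r i)).

Definition NSp (p : nat) (U : G -> Prop) : Prop := is_normal U /\ p_power_index p U.

Definition directed (S : (G -> Prop) -> Prop) : Prop :=
  forall U V, S U -> S V -> exists W, S W /\ subset W U /\ subset W V.

(* Elements of lim_{U in C} G/U: families c with c V = c U mod U whenever V <= U
   (represented by a total function on subgroups; only values on C matter). *)
Definition compatible (C : (G -> Prop) -> Prop) (c : (G -> Prop) -> G) : Prop :=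
  forall U V, C U -> C V -> subset V U -> U (c V * ginv (c U)).

(* Two such families define the same element of the inverse limit. *)
Definition fam_eq (C : (G -> Prop) -> Prop) (c c' : (G -> Prop) -> G) : Prop :=
  forall U, C U -> U (c U * ginv (c' U)).

(* lim_{U in S} H_1(U, F_p) = 0, transition maps H_1(V) -> H_1(U) induced by V <= U:
   every compatible family of classes u_U in U/Phi_p(U) is zero. *)
Definition lim_H1_zero (p : nat) (S : (G -> Prop) -> Prop) : Prop :=
  forall c : (G -> Prop) -> G,
    (forall U, S U -> U (c U)) ->
    (forall U V, S U -> S V -> subset V U -> PhiP p U (c V * ginv (c U))) ->
    forall U, S U -> PhiP p U (c U).

(* The natural map hat A_p -> lim_{U in S} A/U (restriction of families)
   is a bijection (it is automatically a continuous group homomorphism). *)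
Definition restriction_bijective (p : nat) (S : (G -> Prop) -> Prop) : Prop :=
  (forall g g', compatible (NSp p) g -> compatible (NSp p) g' ->
     fam_eq S g g' -> fam_eq (NSp p) g g') /\
  (forall c, compatible S c -> exists g, compatible (NSp p) g /\ fam_eq S g c).

End Groups.

Definition is_hom (G H : group) (f : G -> H) : Prop :=
  forall x y, f (gmul x y) = gmul (f x) (f y).

Definition surface_rel (G : group) (g : nat) (a b : nat -> G) : G :=
  foldr (fun i acc => gmul (gcomm (a i) (b i)) acc) (gone G) (iota 0 g).

(* A is the orientable surface group of genus g >= 1:
   A = < a_1,b_1,...,a_g,b_g | prod [a_i,b_i] = 1 > via the universal property. *)
Definition orientable_surface_group (A : group) : Prop :=
  exists g, 1 <= g /\ exists a b : nat -> A,
    surface_rel g a b = gone A /\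
    forall (H : group) (a' b' : nat -> H), surface_rel g a' b' = gone H ->
      (exists f : A -> H, is_hom f /\ forall i, i < g -> f (a i) = a' i /\ f (b i) = b' i) /\
      (forall f1 f2 : A -> H, is_hom f1 -> is_hom f2 ->
         (forall i, i < g -> f1 (a i) = f2 (a i) /\ f1 (b i) = f2 (b i)) ->
         forall x, f1 x = f2 x).

(* Main.v *)
Require Import Defs.
From mathcomp Require Import all_boot.
From Stdlib Require Import Classical ClassicalEpsilon FunctionalExtensionality PropExtensionality ProofIrrelevance.
Set Implicit Arguments. Unset Strict Implicit. Unset Printing Implicit Defensive.

Section G.
Variable G : group.
Local Notation "x ** y" := (gmul x y) (at level 40, left associativity).
Local Notation e1 := (gone G).
Implicit Types x y z : G.

Lemma mulgV' x : x ** ginv x = e1.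
Proof.
have e : ginv (ginv x) ** ginv x = e1 by apply: gmulV.
rewrite -[x ** ginv x]gmul1 -{1}e -gmulA (gmulA (ginv x)) gmulV gmul1. exact: e.
Qed.
Lemma mulg1' x : x ** e1 = x.
Proof. by rewrite -(gmulV x) gmulA mulgV' gmul1. Qed.
Lemma mulKg' x y : ginv x ** (x ** y) = y.
Proof. by rewrite gmulA gmulV gmul1. Qed.
Lemma mulKVg' x y : x ** (ginv x ** y) = y.
Proof. by rewrite gmulA mulgV' gmul1. Qed.
Lemma mulgK' x y : x ** y ** ginv y = x.
Proof. by rewrite -gmulA mulgV' mulg1'. Qed.
Lemma mulgKV' x y : x ** ginv y ** y = x.
Proof. by rewrite -gmulA gmulV mulg1'. Qed.
Lemma mulg_inj x y z : x ** y = x ** z -> y = z.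
Proof. by move=> e; rewrite -(mulKg' x y) e mulKg'. Qed.
Lemma invgK' x : ginv (ginv x) = x.
Proof. by apply: (@mulg_inj (ginv x)); rewrite mulgV' gmulV. Qed.
Lemma invMg' x y : ginv (x ** y) = ginv y ** ginv x.
Proof.
apply: (@mulg_inj (x ** y)); rewrite mulgV' -gmulA (gmulA y) mulgV' gmul1 mulgV' //.
Qed.
Lemma invg1' : ginv e1 = e1.
Proof. by rewrite -{2}(gmulV e1) mulg1'. Qed.

Lemma sg1 (H : G -> Prop) : is_subgroup H -> H e1.  Proof. by case. Qed.
Lemma sgM (H : G -> Prop) x y : is_subgroup H -> H x -> H y -> H (x ** y).
Proof. by case=> _ []; auto. Qed.
Lemma sgV (H : G -> Prop) x : is_subgroup H -> H x -> H (ginv x).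
Proof. by case=> _ []; auto. Qed.
Lemma sgVr (H : G -> Prop) x : is_subgroup H -> H (ginv x) -> H x.
Proof. by move=> sH /(sgV sH); rewrite invgK'. Qed.
Lemma sg_div (H : G -> Prop) x y : is_subgroup H -> H x -> H y -> H (x ** ginv y).
Proof. by move=> sH hx hy; apply: sgM => //; apply: sgV. Qed.
Lemma cos_refl (H : G -> Prop) x : is_subgroup H -> H (x ** ginv x).
Proof. by move=> sH; rewrite mulgV'; apply: sg1. Qed.
Lemma cos_sym (H : G -> Prop) x y : is_subgroup H -> H (x ** ginv y) -> H (y ** ginv x).
Proof. by move=> sH /(sgV sH); rewrite invMg' invgK'. Qed.
Lemma cos_trans (H : G -> Prop) x y z : is_subgroup H -> H (x ** ginv y) -> H (y ** ginv z) -> H (x ** ginv z).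
Proof. by move=> sH h1 h2; have := sgM sH h1 h2; rewrite -gmulA mulKg'. Qed.

Lemma gen_sub (X : G -> Prop) : is_subgroup (gen X).
Proof.
split; first by move=> H [].
split=> [x y hx hy H sH sXH|x hx H sH sXH].
  by apply: sgM => //; [apply: hx | apply: hy].
by apply: sgV => //; apply: hx.
Qed.
Lemma gen_in (X : G -> Prop) x : X x -> gen X x.
Proof. by move=> hx H _ s; apply: s. Qed.
Lemma gen_min (X H : G -> Prop) : is_subgroup H -> Defs.subset X H -> Defs.subset (gen X) H.
Proof. by move=> sH sXH x hx; apply: hx. Qed.
Lemma gen_mono (X Y : G -> Prop) : Defs.subset X Y -> Defs.subset (gen X) (gen Y).
Proof. move=> sXY; apply: gen_min; first exact: gen_sub. by move=> x /sXY; apply: gen_in. Qed.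

Inductive reach (X : G -> Prop) : G -> Prop :=
 | reach1 : reach X e1
 | reachM x y : reach X x -> X y -> reach X (x ** y)
 | reachV x y : reach X x -> X y -> reach X (x ** ginv y).

Lemma reach_mul (X : G -> Prop) x y : reach X x -> reach X y -> reach X (x ** y).
Proof.
move=> hx; elim=> [|u v _ IH Xv|u v _ IH Xv]; first by rewrite mulg1'.
  by rewrite gmulA; apply: reachM.
by rewrite gmulA; apply: reachV.
Qed.
Lemma reach_inv (X : G -> Prop) x : reach X x -> reach X (ginv x).
Proof.
elim=> [|y z _ IH Xz|y z _ IH Xz]; first by rewrite invg1'; apply: reach1.
  rewrite invMg'; apply: reach_mul => //.
  by rewrite -(gmul1 (ginv z)); apply: reachV => //; apply: reach1.
rewrite invMg' invgK'; apply: reach_mul => //.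
by rewrite -(gmul1 z); apply: reachM => //; apply: reach1.
Qed.
Lemma gen_reach (X : G -> Prop) x : gen X x -> reach X x.
Proof.
move=> h; apply: h; last by move=> y Xy; rewrite -(gmul1 y); apply: reachM => //; apply: reach1.
split; first exact: reach1. split; [exact: reach_mul | exact: reach_inv].
Qed.


Definition conj g x := ginv g ** x ** g.
Lemma conjM g x y : conj g (x ** y) = conj g x ** conj g y.
Proof. by rewrite /conj !gmulA mulgK'. Qed.
Lemma conjV g x : conj g (ginv x) = ginv (conj g x).
Proof. by rewrite /conj !invMg' invgK' gmulA. Qed.
Lemma conj1 g : conj g e1 = e1.
Proof. by rewrite /conj mulg1' gmulV. Qed.
Lemma gpowS x n : gpow x n.+1 = gpow x n ** x.
Proof. by []. Qed.
Lemma gpow0 x : gpow x 0 = e1. Proof. by []. Qed.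
Lemma gpowD x m n : gpow x (m + n) = gpow x m ** gpow x n.
Proof. elim: n => [|n IH]; first by rewrite addn0 gpow0 mulg1'. by rewrite addnS !gpowS IH gmulA. Qed.
Lemma conj_gpow g x n : conj g (gpow x n) = gpow (conj g x) n.
Proof. elim: n => [|n IH]; first by rewrite !gpow0 conj1. by rewrite !gpowS conjM IH. Qed.
Lemma conj_gcomm g x y : conj g (gcomm x y) = gcomm (conj g x) (conj g y).
Proof. by rewrite /gcomm !conjM !conjV. Qed.
Lemma sg_gpow (H : G -> Prop) x n : is_subgroup H -> H x -> H (gpow x n).
Proof. move=> sH hx; elim: n => [|n IH]; [exact: sg1 | exact: sgM]. Qed.
Lemma sg_gcomm (H : G -> Prop) x y : is_subgroup H -> H x -> H y -> H (gcomm x y).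
Proof. by move=> sH hx hy; rewrite /gcomm; repeat apply: sgM => //; apply: sgV. Qed.

Lemma gen_normal (X : G -> Prop) :
  (forall g x, X x -> X (conj g x)) -> forall g x, gen X x -> gen X (conj g x).
Proof.
move=> hX g x hx; apply: (hx (fun x => gen X (conj g x))).
  split; first by rewrite /= conj1; apply: (sg1 (gen_sub X)).
  split=> [a b ha hb|a ha] /=; first by rewrite conjM; apply: (sgM (gen_sub X)).
  by rewrite conjV; apply: (sgV (gen_sub X)).
by move=> y Xy; apply: gen_in; apply: hX.
Qed.

Lemma normal_conj (U : G -> Prop) g x : is_normal U -> U x -> U (conj g x).
Proof. by case=> _ h; apply: h. Qed.

Section Phi.
Variable p : nat.
Lemma Phi_sub (U : G -> Prop) : is_subgroup U -> Defs.subset (PhiP p U) U.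
Proof.
move=> sU; apply: gen_min => // y [[u [hu ->]]|[u [v [hu [hv ->]]]]].
  exact: sg_gpow. exact: sg_gcomm.
Qed.
Lemma Phi_mono (U V : G -> Prop) : Defs.subset V U -> Defs.subset (PhiP p V) (PhiP p U).
Proof.
move=> sVU; apply: gen_mono => y [[u [hu ->]]|[u [v [hu [hv ->]]]]].
  by left; exists u; split => //; apply: sVU.
by right; exists u, v; split; [apply: sVU | split => //; apply: sVU].
Qed.
Lemma Phi_normal (U : G -> Prop) : is_normal U -> is_normal (PhiP p U).
Proof.
move=> nU; split; first exact: gen_sub.
move=> g x; apply: (gen_normal _ g) => {}g y [[u [hu ->]]|[u [v [hu [hv ->]]]]].
  by left; exists (conj g u); rewrite conj_gpow; split => //; apply: normal_conj.
by right; exists (conj g u), (conj g v); rewrite conj_gcomm; split; [|split] => //; apply: normal_conj.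
Qed.
Lemma Phi_pow (U : G -> Prop) u : U u -> PhiP p U (gpow u p).
Proof. by move=> hu; apply: gen_in; left; exists u. Qed.
Lemma Phi_comm (U : G -> Prop) u v : is_subgroup U -> U u -> U v -> PhiP p U (u ** v ** ginv (v ** u)).
Proof.
move=> sU hu hv; apply: gen_in; right; exists (ginv u), (ginv v).
split; [|split]; try by apply: sgV.
by rewrite /gcomm !invgK' invMg' !gmulA.
Qed.
End Phi.
End G.

Section Fin.
Variable G : group.
Local Notation "x ** y" := (gmul x y) (at level 40, left associativity).
Local Notation e1 := (gone G).
Variables (p : nat) (p_gt0 : 0 < p) (U : G -> Prop) (nU : is_normal U).
Variables (F : finType) (t : F -> G) (htU : forall f, U (t f)).
Hypothesis hgen : forall u, U u -> gen (fun x => exists f, x = t f) u.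

Let sU : is_subgroup U := proj1 nU.
Let Phi := PhiP p U.
Let nPhi : is_normal Phi := Phi_normal p nU.
Let sPhi : is_subgroup Phi := proj1 nPhi.
Let eqv x y := Phi (x ** ginv y).

Lemma eqv_refl x : eqv x x. Proof. exact: cos_refl. Qed.
Lemma eqv_sym x y : eqv x y -> eqv y x. Proof. exact: cos_sym. Qed.
Lemma eqv_trans x y z : eqv x y -> eqv y z -> eqv x z. Proof. exact: cos_trans. Qed.
Lemma eqv_mulr x y z : eqv x y -> eqv (x ** z) (y ** z).
Proof. by rewrite /eqv invMg' gmulA mulgK'. Qed.
Lemma eqv_mull x y z : eqv x y -> eqv (z ** x) (z ** y).
Proof.
move=> h; have := normal_conj (ginv z) nPhi h.
by rewrite /eqv /conj invMg' invgK' !gmulA.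
Qed.
Lemma eqv_mul x y x' y' : eqv x x' -> eqv y y' -> eqv (x ** y) (x' ** y').
Proof. move=> h1 h2; apply: eqv_trans (eqv_mull _ h2); exact: eqv_mulr. Qed.
Lemma eqv_comm x y : U x -> U y -> eqv (x ** y) (y ** x).
Proof. exact: Phi_comm. Qed.
Lemma eqv_Phi x y : Phi x -> eqv (x ** y) y.
Proof. by rewrite /eqv mulgK'. Qed.

Lemma gpow_mulp x q : U x -> Phi (gpow x (q * p)).
Proof.
move=> hx; elim: q => [|q IH]; first exact: (sg1 sPhi).
by rewrite mulSn addnC gpowD; apply: (sgM sPhi) => //; apply: Phi_pow.
Qed.
Lemma gpow_mod x m : U x -> eqv (gpow x m) (gpow x (m %% p)).
Proof.
move=> hx; rewrite {1}(divn_eq m p) gpowD; apply: eqv_Phi; exact: gpow_mulp.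
Qed.

Definition prodl (s : seq F) (e : F -> nat) :=
  foldr (fun f acc => gpow (t f) (e f) ** acc) e1 s.
Lemma prodl_U s e : U (prodl s e).
Proof. elim: s => [|f s IH] /=; [exact: (sg1 sU) | apply: (sgM sU) => //; exact: sg_gpow]. Qed.
Lemma eq_prodl s e e' : (forall f, f \in s -> e f = e' f) -> prodl s e = prodl s e'.
Proof.
elim: s => [|f s IH] //= h; rewrite h ?mem_head // IH // => x xs.
by apply: h; rewrite in_cons xs orbT.
Qed.
Lemma prodl0 s : prodl s (fun _ => 0) = e1.
Proof. by elim: s => [|f s IH] //=; rewrite IH gmul1. Qed.

Definition incr (e : F -> nat) f := fun x => if x == f then (e x).+1 else e x.
Lemma prodl_incr s e f : uniq s -> f \in s -> eqv (prodl s e ** t f) (prodl s (incr e f)).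
Proof.
elim: s => [|f' s IH] //= /andP [nf's us] fs.
have [ef|nef] := eqVneq f' f.
  subst f'; rewrite /incr eqxx gpowS.
  rewrite (@eq_prodl s (fun x => if x == f then (e x).+1 else e x) e); last first.
    by move=> x xs; case: eqP => // exf; subst x; rewrite xs in nf's.
  rewrite -gmulA -(gmulA _ (t f)); apply: eqv_mull; apply: eqv_comm => //; exact: prodl_U.
rewrite /incr (negbTE nef) -gmulA; apply: eqv_mull; apply: IH => //.
by move: fs; rewrite in_cons eq_sym (negbTE nef).
Qed.

Let X x := exists e : F -> nat, eqv x (prodl (enum F) e).
Lemma X_eqv x y : eqv x y -> X y -> X x.
Proof. by move=> h [e he]; exists e; apply: eqv_trans he. Qed.
Lemma X_mult x f : X x -> X (x ** t f).
Proof.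
case=> e he; exists (incr e f).
apply: (@eqv_trans _ (prodl (enum F) e ** t f)); first exact: eqv_mulr.
by apply: prodl_incr; [exact: enum_uniq | rewrite mem_enum].
Qed.
Lemma X_mulpow x f m : X x -> X (x ** gpow (t f) m).
Proof.
move=> hx; elim: m => [|m IH]; first by rewrite gpow0 mulg1'.
by rewrite gpowS gmulA; apply: X_mult.
Qed.
Lemma X_mulV x f : X x -> X (x ** ginv (t f)).
Proof.
move=> hx; apply: (@X_eqv _ (x ** gpow (t f) p.-1)); last exact: X_mulpow.
apply: eqv_mull; rewrite /eqv -invMg'; apply: (sgV sPhi).
rewrite -gpowS prednK //; exact: Phi_pow.
Qed.

Lemma fin_quot : exists R : {ffun F -> 'I_p} -> G,
  forall u, U u -> exists j, Phi (u ** ginv (R j)).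
Proof.
exists (fun j : {ffun F -> 'I_p} => prodl (enum F) (fun f => j f)) => u hu.
have : X u.
  have := gen_reach (hgen hu); elim=> [|x y _ IH [f ->]|x y _ IH [f ->]].
  - exists (fun _ => 0); rewrite prodl0; exact: eqv_refl.
  - exact: X_mult.
  - exact: X_mulV.
case=> e he; exists [ffun f => Ordinal (ltn_pmod (e f) p_gt0)].
apply: eqv_trans he _.
have -> : prodl (enum F) (fun f => [ffun f => Ordinal (ltn_pmod (e f) p_gt0)] f) =
          prodl (enum F) (fun f => e f %% p) by apply: eq_prodl => f _; rewrite ffunE.
elim: (enum F) => [|f s IH] /=; first exact: eqv_refl.
apply: eqv_mul => //; exact: gpow_mod.
Qed.
End Fin.

Section Cls.
Variable A : group.
Local Notation "x ** y" := (gmul x y) (at level 40, left associativity).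
Local Notation e1 := (gone A).
Variables (H : A -> Prop) (sH : is_subgroup H) (n : nat) (r : 'I_n -> A).
Hypothesis hr : forall x, exists! i, H (x ** ginv (r i)).

Lemma cls_ex x : exists i, H (x ** ginv (r i)).
Proof. by case: (hr x) => i [h _]; exists i. Qed.
Definition cls x : 'I_n := proj1_sig (constructive_indefinite_description _ (cls_ex x)).
Lemma cls_spec x : H (x ** ginv (r (cls x))).
Proof. exact: proj2_sig (constructive_indefinite_description _ (cls_ex x)). Qed.
Lemma cls_uniq x i : H (x ** ginv (r i)) -> cls x = i.
Proof.
move=> h; case: (hr x) => j [_ u].
by rewrite -(u _ h) -(u _ (cls_spec x)).
Qed.
Lemma cls_eq x y : H (x ** ginv y) -> cls x = cls y.
Proof. move=> h; apply: cls_uniq; apply: cos_trans sH h (cls_spec y). Qed.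
Lemma cls_r i : cls (r i) = i.
Proof. apply: cls_uniq; exact: cos_refl. Qed.
Lemma cls_mulr x y : cls (x ** y) = cls (r (cls x) ** y).
Proof. apply: cls_eq; rewrite invMg' gmulA mulgK'; exact: cls_spec. Qed.
Lemma cls_in x : H x <-> cls x = cls e1.
Proof.
split=> [h|e]; first by apply: cls_eq; rewrite invg1' mulg1'.
have h1 := cls_spec x; have h2 := cls_spec e1; rewrite e in h1.
have := cos_trans sH h1 (cos_sym sH h2). by rewrite invg1' mulg1'.
Qed.
End Cls.

Section Surf.
Variable A : group.
Local Notation "x ** y" := (gmul x y) (at level 40, left associativity).
Local Notation e1 := (gone A).
Variables (g : nat) (g_pos : 1 <= g) (a b : nat -> A).
Hypothesis hrel : surface_rel g a b = gone A.
Hypothesis huniv : forall (H : group) (a' b' : nat -> H), surface_rel g a' b' = gone H ->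
      (exists f : A -> H, is_hom f /\ forall i, i < g -> f (a i) = a' i /\ f (b i) = b' i) /\
      (forall f1 f2 : A -> H, is_hom f1 -> is_hom f2 ->
         (forall i, i < g -> f1 (a i) = f2 (a i) /\ f1 (b i) = f2 (b i)) ->
         forall x, f1 x = f2 x).

Definition letter := ('I_g * bool)%type.
Definition elt (l : letter) : A := if l.2 then b l.1 else a l.1.
Definition Lgen (x : A) := exists l, x = elt l.

Definition Hc := {x : A | gen Lgen x}.
Lemma Hc_eq (x y : Hc) : proj1_sig x = proj1_sig y -> x = y.
Proof. case: x => x hx; case: y => y hy /= e; subst y; f_equal; apply: proof_irrelevance. Qed.
Definition hmul (x y : Hc) : Hc :=
  exist _ (proj1_sig x ** proj1_sig y) (sgM (gen_sub Lgen) (proj2_sig x) (proj2_sig y)).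
Definition hone : Hc := exist _ e1 (sg1 (gen_sub Lgen)).
Definition hinv (x : Hc) : Hc := exist _ (ginv (proj1_sig x)) (sgV (gen_sub Lgen) (proj2_sig x)).
Lemma hmulA x y z : hmul x (hmul y z) = hmul (hmul x y) z.
Proof. apply: Hc_eq; exact: gmulA. Qed.
Lemma hmul1 x : hmul hone x = x.
Proof. apply: Hc_eq; exact: gmul1. Qed.
Lemma hmulV x : hmul (hinv x) x = hone.
Proof. apply: Hc_eq; exact: gmulV. Qed.
Definition Hs : group := @Defs.Group Hc hmul hone hinv hmulA hmul1 hmulV.

Lemma idx_lt i : (if i < g then i else 0) < g.
Proof. by case: ifP. Qed.
Definition a' (i : nat) : Hs := exist _ (a (if i < g then i else 0))
  (gen_in (ex_intro _ (Ordinal (idx_lt i), false) erefl)).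
Definition b' (i : nat) : Hs := exist _ (b (if i < g then i else 0))
  (gen_in (ex_intro _ (Ordinal (idx_lt i), true) erefl)).

Lemma all_gen x : gen Lgen x.
Proof.
have hs : surface_rel g a' b' = gone Hs.
  apply: Hc_eq; rewrite /= -hrel /surface_rel.
  have : forall i, i \in iota 0 g -> i < g by move=> i; rewrite mem_iota.
  elim: (iota 0 g) => [|i s IH] //= h.
  by rewrite IH ?(h i (mem_head _ _)) // => j js; apply: h; rewrite in_cons js orbT.
have [[f [hf hfab]] _] := huniv hs.
have [_ uA] := huniv hrel.
have e : forall y, id y = proj1_sig (f y).
  apply: uA => //.
  - by move=> y z /=; rewrite hf.
  - by move=> i ig /=; have [-> ->] := hfab i ig; rewrite /= ig.
rewrite (e x); exact: (proj2_sig (f x)).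
Qed.

Definition lbval (lb : letter * bool) : A := if lb.2 then ginv (elt lb.1) else elt lb.1.
Definition ev (w : seq (letter * bool)) : A := foldl (fun acc lb => acc ** lbval lb) e1 w.

Lemma word_ex x : exists w, ev w = x.
Proof.
have := gen_reach (all_gen x); elim=> [|y z _ [w <-] [l ->]|y z _ [w <-] [l ->]].
- by exists [::].
- by exists (rcons w (l, false)); rewrite /ev foldl_rcons.
- by exists (rcons w (l, true)); rewrite /ev foldl_rcons.
Qed.

Definition genL (L : seq (seq (letter * bool))) : A -> Prop :=
  gen (fun x => exists w, w \in L /\ ev w = x).

Section Schreier.
Variables (H : A -> Prop) (sH : is_subgroup H) (n : nat) (r : 'I_n -> A).
Hypothesis hr : forall x, exists! i, H (x ** ginv (r i)).
Local Notation cls := (cls hr).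

Definition tS (o : option ('I_n * (letter * bool))) : A :=
  match o with
  | None => ginv (r (cls e1))
  | Some (i, lb) => r i ** lbval lb ** ginv (r (cls (r i ** lbval lb)))
  end.
Lemma tS_in o : H (tS o).
Proof.
case: o => [[i lb]|] /=; first exact: (cls_spec hr).
by have := cls_spec hr e1; rewrite gmul1.
Qed.
Let T x := exists o, x = tS o.
Lemma schreier u : H u -> gen T u.
Proof.
have sT := gen_sub T.
have key : forall x, gen T (x ** ginv (r (cls x))).
  move=> x; have := gen_reach (all_gen x).
  have step : forall y lb, gen T (y ** ginv (r (cls y))) ->
      gen T (y ** lbval lb ** ginv (r (cls (y ** lbval lb)))).
    move=> y lb h; rewrite (cls_mulr sH hr).
    have := sgM sT h (gen_in (ex_intro _ (Some (cls y, lb)) erefl)).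
    by rewrite /= !gmulA mulgKV'.
  elim=> [|y z _ IH [l ->]|y z _ IH [l ->]].
  - by rewrite gmul1; apply: gen_in; exists None.
  - exact: (step y (l, false)).
  - exact: (step y (l, true)).
move=> hu; have := key u.
have -> : cls u = cls e1 by apply/(cls_in sH hr).
move=> h; have := sgM sT h (sgV sT (gen_in (ex_intro _ None erefl))).
by rewrite /= invgK' mulgKV'.
Qed.

Lemma code_ex : exists L, forall x, H x <-> genL L x.
Proof.
pose wd o := proj1_sig (constructive_indefinite_description _ (word_ex (tS o))).
have hwd o : ev (wd o) = tS o := proj2_sig (constructive_indefinite_description _ (word_ex (tS o))).
exists (map wd (enum {: option ('I_n * (letter * bool))})) => x; split.
  move=> hx; apply: (gen_min (gen_sub _) _ (schreier hx)).
  move=> y [o ->]; apply: gen_in; exists (wd o); split => //.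
  by apply: map_f; rewrite mem_enum.
move=> hx; apply: (gen_min sH _ hx) => y [w [/mapP [o _ ->] <-]]; rewrite hwd; exact: tS_in.
Qed.
End Schreier.

Lemma NSp_code p U : NSp p U -> exists L, forall x, U x <-> genL L x.
Proof. case=> [[sU _] [k [r hr]]]; exact: (code_ex sU hr). Qed.

Lemma NSp_fin p U : prime p -> NSp p U -> exists (F : finType) (R : F -> A),
  forall u, U u -> exists j, PhiP p U (u ** ginv (R j)).
Proof.
move=> pp [nU [k [r hr]]]; have sU := proj1 nU.
have [R hR] := fin_quot (prime_gt0 pp) nU (@tS_in U _ r hr) (@schreier U sU _ r hr).
by exists {ffun option ('I_(p ^ k) * (letter * bool)) -> 'I_p}, R.
Qed.
End Surf.

Definition asb (P : Prop) : bool := if excluded_middle_informative P then true else false.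
Lemma asbP (P : Prop) : asb P <-> P.
Proof. by rewrite /asb; case: excluded_middle_informative. Qed.

Lemma min_ex (X : Type) (f : X -> nat) (P : X -> Prop) :
  (exists x, P x) -> exists x, P x /\ forall y, P y -> f x <= f y.
Proof.
case=> x0 hx0.
suff : forall m x, f x <= m -> P x -> exists x, P x /\ forall y, P y -> f x <= f y.
  by move=> h; exact: (h _ x0 (leqnn _) hx0).
elim=> [|m IH] x hm hx.
  exists x; split => // y _; by move: hm; rewrite leqn0 => /eqP ->.
case: (Classical_Prop.classic (forall y, P y -> f x <= f y)) => [h|]; first by exists x; split.
move=> /not_all_ex_not [y hy']; have [hy hlt] := imply_to_and _ _ hy'.
have lt : f y < f x by rewrite ltnNge; apply/negP.
apply: (IH y) => //; rewrite -ltnS; exact: leq_trans lt hm.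
Qed.

Module QuotPart.
From mathcomp Require Import all_fingroup all_solvable.
Section Quot.
Variable A : Defs.group.
Local Notation "x ** y" := (gmul x y) (at level 40, left associativity).
Local Notation e1 := (gone A).
Variables (N : A -> Prop) (nN : is_normal N) (n : nat) (r : 'I_n -> A).
Hypothesis hr : forall x, exists! i, N (x ** ginv (r i)).
Let sN := proj1 nN.
Local Notation cls := (cls hr).

Lemma N_r0 : N (r (cls e1)).
Proof. by apply/(cls_in sN hr); rewrite cls_r. Qed.
Lemma cls_r0 y : cls (r (cls e1) ** y) = cls y.
Proof. apply: (cls_eq sN hr); rewrite mulgK'; exact: N_r0. Qed.

Lemma rmul_inj x : injective (fun i => cls (r i ** x)).
Proof.
move=> i j /= e.
have h1 := cls_spec hr (r i ** x); have h2 := cls_spec hr (r j ** x); rewrite e in h1.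
have := cos_trans sN h1 (cos_sym sN h2).
rewrite invMg' gmulA mulgK' => h.
by rewrite -(cls_r sN hr i) -(cls_r sN hr j); apply: (cls_eq sN hr).
Qed.
Definition rho x : {perm 'I_n} := perm (@rmul_inj x).
Lemma rhoE x i : rho x i = cls (r i ** x).
Proof. by rewrite permE. Qed.
Lemma rhoM x y : rho (x ** y) = (rho x * rho y)%g.
Proof.
apply/permP => i; rewrite permM !rhoE gmulA; exact: (cls_mulr sN hr).
Qed.
Lemma rho_ker x : rho x = 1%g <-> N x.
Proof.
split=> [e|h].
  apply/(cls_in sN hr); rewrite -(cls_r0 x) -rhoE e perm1 //.
apply/permP => i; rewrite rhoE perm1 -{2}(cls_r sN hr i); apply: (cls_eq sN hr).
have := normal_conj (ginv (r i)) nN h; by rewrite /conj invgK'.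
Qed.
Lemma rho1 : rho e1 = 1%g.
Proof. apply/rho_ker; exact: sg1. Qed.
Lemma rhoV x : rho (ginv x) = ((rho x)^-1)%g.
Proof. by apply: (mulIg (rho x)); rewrite -rhoM gmulV rho1 mulVg. Qed.
Lemma rho_pow x m : rho (gpow x m) = (rho x ^+ m)%g.
Proof. elim: m => [|m IH]; first by rewrite rho1. by rewrite gpowS rhoM IH expgSr. Qed.
Lemma rho_comm x y : rho (gcomm x y) = commg (rho x) (rho y).
Proof. by rewrite /gcomm !rhoM !rhoV /commg /conjg !mulgA. Qed.
Lemma rho_eq x y : N (x ** ginv y) -> rho x = rho y.
Proof. by move/rho_ker; rewrite rhoM rhoV => /eqP; rewrite mulg_eq1 eq_sym invgK => /eqP. Qed.

Definition G0 : {set {perm 'I_n}} := [set rho (r i) | i : 'I_n].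
Lemma rho_G0 x : rho x \in G0.
Proof.
rewrite (@rho_eq x (r (cls x))); first exact: imset_f.
exact: (cls_spec hr x).
Qed.
Lemma G0_gs : group_set G0.
Proof.
apply/group_setP; split; first by rewrite -rho1 rho_G0.
move=> _ _ /imsetP [i _ ->] /imsetP [j _ ->]; rewrite -rhoM; exact: rho_G0.
Qed.
Definition Gr := Group G0_gs.
Lemma card_G0 : #|G0| = n.
Proof.
rewrite card_imset ?card_ord // => i j e.
have := congr1 (fun s : {perm 'I_n} => s (cls e1)) e; rewrite !rhoE !cls_r0 !(cls_r sN hr) //.
Qed.

Definition img (U : A -> Prop) : {set {perm 'I_n}} := [set q | asb (exists u, U u /\ rho u = q)].
Lemma img_in (U : A -> Prop) u : U u -> rho u \in img U.
Proof. by move=> hu; rewrite inE; apply/asbP; exists u. Qed.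
Lemma imgP (U : A -> Prop) q : q \in img U -> exists u, U u /\ rho u = q.
Proof. by rewrite inE => /asbP. Qed.
Lemma img_mono (U V : A -> Prop) : Defs.subset V U -> img V \subset img U.
Proof. by move=> sVU; apply/subsetP => q /imgP [u [hu <-]]; apply: img_in; apply: sVU. Qed.
Lemma img_G0 U : img U \subset G0.
Proof. by apply/subsetP => q /imgP [u [_ <-]]; exact: rho_G0. Qed.
End Quot.

Section PhiH.
Local Open Scope group_scope.
Lemma PhiH_exp (gT : finGroupType) (p : nat) (H : {group gT}) x :
  p.-group H -> x \in H -> (x ^+ p)%g \in 'Phi(H).
Proof.
move=> pH xH; rewrite (Phi_joing pH).
apply: mem_gen; apply/setUP; right.
have := Mho_p_elt 1 xH (mem_p_elt pH xH). by rewrite expn1.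
Qed.
Lemma PhiH_comm (gT : finGroupType) (p : nat) (H : {group gT}) x y :
  p.-group H -> x \in H -> y \in H -> commg x y \in 'Phi(H).
Proof.
move=> pH xH yH; rewrite (Phi_joing pH).
apply: mem_gen; apply/setUP; left. exact: mem_commg.
Qed.

End PhiH.

Section PPart.
Local Open Scope group_scope.
Variables (A : Defs.group) (p : nat) (pp : prime p) (S : (A -> Prop) -> Prop).
Hypothesis hS : exists U, S U.
Hypothesis hdir : directed S.
Variable N : A -> Prop.
Hypothesis hN : NSp p N.
Hypothesis hnot : ~ exists U, S U /\ Defs.subset U N.

Lemma ppart : exists U0 (P : A -> Prop), S U0 /\ is_subgroup P /\
  Defs.subset (PhiP p U0) P /\
  forall V, S V -> Defs.subset V U0 -> exists v, V v /\ ~ P v.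
Proof.
case: hN => nN [k [r hr]].
have [U0 [SU0 minU0]] := min_ex (fun U => #|img nN hr U|) hS.
have imgeq : forall V, S V -> Defs.subset V U0 -> img nN hr V = img nN hr U0.
  move=> V SV sVU; apply/eqP; rewrite eqEcard img_mono //=; exact: minU0.
pose H := <<img nN hr U0>>%G.
have pH : pgroup p H.
  apply: (@pgroupS _ _ (Gr nN hr)); first by rewrite gen_subG; exact: img_G0.
  by rewrite /pgroup /= card_G0 pnatX pnat_id.
have ntH : H :!=: 1%g.
  apply/negP => /eqP H1; apply: hnot; exists U0; split => // u hu.
  apply/(rho_ker nN hr).
  have : rho nN hr u \in H by apply: mem_gen; exact: img_in.
  by rewrite H1 => /set1gP.
have prH := Phi_proper ntH.
exists U0, (fun x => rho nN hr x \in 'Phi(H)); split => //; split.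
  split; first by rewrite rho1 // group1.
  split=> [x y hx hy|x hx]; first by rewrite rhoM // groupM.
  by rewrite rhoV // groupV.
split.
  apply: gen_min.
    split; first by rewrite rho1 // group1.
    split=> [x y hx hy|x hx]; first by rewrite rhoM // groupM.
    by rewrite rhoV // groupV.
  move=> y [[u [hu ->]]|[u [v [hu [hv ->]]]]].
    rewrite rho_pow //; apply: PhiH_exp pH _; apply: mem_gen; exact: img_in.
  rewrite rho_comm //; apply: PhiH_comm pH _ _; apply: mem_gen; exact: img_in.
move=> V SV sVU; apply: NNPP => hno.
have hall : forall v, V v -> rho nN hr v \in 'Phi(H).
  move=> v hv; apply: NNPP => hp; apply: hno; by exists v.
move: prH; rewrite properE => /andP [_ /negP]; apply.
rewrite gen_subG -(imgeq V SV sVU); apply/subsetP => q /imgP [v [hv <-]]; exact: hall.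
Qed.
End PPart.

End QuotPart.

Lemma stab_sets (T : finType) (d : nat -> {set T}) n :
  (forall m, n <= m -> d m.+1 \subset d m) ->
  exists M, n <= M /\ forall m, M <= m -> d M \subset d m.
Proof.
move=> hd.
have dec : forall M m, n <= M -> M <= m -> d m \subset d M.
  move=> M m hM; elim: m => [|m IH]; first by rewrite leqn0 => /eqP ->.
  rewrite leq_eqVlt => /orP [/eqP <-|hlt]; first exact: subxx.
  apply: subset_trans (IH hlt); apply: hd; exact: leq_trans hM hlt.
have [M [hM minM]] := min_ex (fun M => #|d M|) (ex_intro (fun M => n <= M) n (leqnn n)).
exists M; split => // m hm.
have sub := dec M m hM hm.
have /eqP -> // : d m == d M by rewrite eqEcard sub minM //; exact: leq_trans hM hm.
Qed.

Section Chain.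
Variable A : Defs.group.
Local Notation "x ** y" := (gmul x y) (at level 40, left associativity).
Local Notation e1 := (gone A).
Variables (p : nat) (S : (A -> Prop) -> Prop).
Hypothesis hdir : directed S.
Variables (C : countType) (dc : C -> A -> Prop).
Hypothesis hcode : forall U, S U -> exists L, forall x, U x <-> dc L x.
Hypothesis hfin : forall U, S U -> exists (F : finType) (R : F -> A),
  forall u, U u -> exists j, PhiP p U (u ** ginv (R j)).
Variables (U0 P : A -> Prop) (SU0 : S U0) (sP : is_subgroup P).
Hypothesis hPhiP : Defs.subset (PhiP p U0) P.
Hypothesis hout : forall V, S V -> Defs.subset V U0 -> exists v, V v /\ ~ P v.
Hypothesis hlim : lim_H1_zero p S.

Let Qn (n : nat) (V W : A -> Prop) := S V -> S W /\ Defs.subset W V /\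
  forall L, unpickle n = Some L -> S (dc L) -> Defs.subset W (dc L).
Lemma next_ex n V : exists W, Qn n V W.
Proof.
case: (Classical_Prop.classic (exists L, unpickle n = Some L /\ S (dc L))) => [[L [eL SL]]|hno].
  case: (Classical_Prop.classic (S V)) => [SV|nSV]; last by exists V.
  have [W [SW [sWV sWL]]] := hdir SV SL.
  exists W => _; split => //; split => // L' eL'; rewrite eL in eL'; case: eL' => <- //.
exists V => SV; split => //; split => // L eL SL; exfalso; apply: hno; by exists L.
Qed.
Definition next n V := proj1_sig (constructive_indefinite_description _ (next_ex n V)).
Lemma next_spec n V : Qn n V (next n V).
Proof. exact: proj2_sig (constructive_indefinite_description _ (next_ex n V)). Qed.

Fixpoint Uc (n : nat) : A -> Prop := match n with 0 => U0 | n'.+1 => next n' (Uc n') end.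
Lemma SUc n : S (Uc n).
Proof. elim: n => [|n IH] //=; have [] := next_spec n IH => //. Qed.
Lemma Uc_dec n m : n <= m -> Defs.subset (Uc m) (Uc n).
Proof.
move=> hnm x; elim: m hnm => [|m IH]; first by rewrite leqn0 => /eqP ->.
rewrite leq_eqVlt => /orP [/eqP <-|hlt] // hx; apply: (IH hlt).
by have [_ [h _]] := next_spec m (SUc m); apply: h.
Qed.
Lemma Uc_cof V : S V -> exists n, Defs.subset (Uc n) V.
Proof.
move=> SV; have [L hL] := hcode SV.
have eV : V = dc L by apply: functional_extensionality => x; apply: propositional_extensionality.
exists (pickle L).+1 => x hx; apply/hL.
have [_ [_ h]] := next_spec (pickle L) (SUc (pickle L)).
by apply: (h L) => //; [rewrite pickleK | rewrite -eV].
Qed.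

Let Phn n := PhiP p (Uc n).
Let sPhn n : is_subgroup (Phn n) := gen_sub _.

Lemma stab n : exists M, n <= M /\ forall m, M <= m -> forall v, Uc M v ->
  exists v', Uc m v' /\ Phn n (v ** ginv v').
Proof.
have [F [R hR]] := hfin (SUc n).
pose d m := [set j : F | asb (exists v, Uc m v /\ Phn n (R j ** ginv v))].
have hdec : forall m, n <= m -> d m.+1 \subset d m.
  move=> m hm; apply/subsetP => j; rewrite !inE => /asbP [v [hv hp]].
  apply/asbP; exists v; split => //.
  by have [_ [h _]] := next_spec m (SUc m); apply: h.
have [M [hM hd]] := stab_sets hdec.
exists M; split => // m hm v hv.
have [j hj] := hR v (Uc_dec hM hv).
have : j \in d M by rewrite inE; apply/asbP; exists v; split => //; exact: (cos_sym (sPhn n)).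
move=> /(subsetP (hd m hm)); rewrite inE => /asbP [v' [hv' hp]].
exists v'; split => //; exact: (cos_trans (sPhn n) hj hp).
Qed.
Definition Mf n := proj1_sig (constructive_indefinite_description _ (stab n)).
Lemma Mf_spec n : n <= Mf n /\ forall m, Mf n <= m -> forall v, Uc (Mf n) v ->
  exists v', Uc m v' /\ Phn n (v ** ginv v').
Proof. exact: proj2_sig (constructive_indefinite_description _ (stab n)). Qed.

Let Rn n x := Uc n x /\ forall m, n <= m -> exists v, Uc m v /\ Phn n (x ** ginv v).
Lemma stable_at n v : Uc (Mf n) v -> Rn n v.
Proof.
have [hn hM] := Mf_spec n.
move=> hv; split; first exact: (@Uc_dec n (Mf n) hn v hv).
move=> m hm; case: (leqP (Mf n) m) => hMm; first exact: hM.
exists v; split; [exact: (@Uc_dec _ _ (ltnW hMm) v hv) | exact: (cos_refl _ (sPhn n))].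
Qed.
Lemma step n x : Rn n x -> exists y, Rn n.+1 y /\ Phn n (y ** ginv x).
Proof.
case=> hx hst; have [hn1 _] := Mf_spec n.+1.
have [v [hv hp]] := hst (Mf n.+1) (ltnW hn1).
exists v; split; [exact: stable_at | exact: (cos_sym (sPhn n))].
Qed.
Lemma base : exists x, Rn 0 x /\ ~ P x.
Proof.
have [v [hv hP]] := hout (SUc (Mf 0)) (Uc_dec (leq0n _)).
by exists v; split => //; apply: stable_at.
Qed.
Let x0 := proj1_sig (constructive_indefinite_description _ base).
Let hx0 : Rn 0 x0 /\ ~ P x0 := proj2_sig (constructive_indefinite_description _ base).

Fixpoint cs (n : nat) : {x | Rn n x} :=
  match n with
  | 0 => exist _ x0 (proj1 hx0)
  | n'.+1 => let y := constructive_indefinite_description _ (step (proj2_sig (cs n'))) in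
             exist _ (proj1_sig y) (proj1 (proj2_sig y))
  end.
Definition cc n := proj1_sig (cs n).
Lemma cc_in n : Uc n (cc n).
Proof. exact: proj1 (proj2_sig (cs n)). Qed.
Lemma cc_step n : Phn n (cc n.+1 ** ginv (cc n)).
Proof. rewrite /cc /=; case: constructive_indefinite_description => y [_ hp] /=; exact: hp. Qed.
Lemma cc_coh n m : n <= m -> Phn n (cc m ** ginv (cc n)).
Proof.
elim: m => [|m IH]; first by rewrite leqn0 => /eqP ->; exact: (cos_refl _ (sPhn _)).
rewrite leq_eqVlt => /orP [/eqP <-|hlt]; first exact: (cos_refl _ (sPhn _)).
apply: (cos_trans (sPhn n)) (IH hlt).
apply: (Phi_mono (p:=p) (@Uc_dec n m hlt)); exact: cc_step.
Qed.
Lemma cc_notP n : ~ P (cc n).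
Proof.
move=> hP; apply: (proj2 hx0).
have h := hPhiP (cc_coh (leq0n n)).
have := sgM sP (sgV sP h) hP; by rewrite invMg' invgK' mulgKV'.
Qed.

Definition cf (U : A -> Prop) : A :=
  match excluded_middle_informative (exists n, Defs.subset (Uc n) U) with
  | left h => cc (proj1_sig (constructive_indefinite_description _ h))
  | right _ => e1
  end.
Lemma cf_spec U : S U -> exists n, Defs.subset (Uc n) U /\ cf U = cc n.
Proof.
move=> SU; rewrite /cf; case: excluded_middle_informative => [h|h]; last first.
  by exfalso; apply: h; exact: Uc_cof.
set s := constructive_indefinite_description _ h.
by exists (proj1_sig s); split => //; exact: proj2_sig s.
Qed.

Lemma chain_false : False.
Proof.
have h1 : forall U, S U -> U (cf U).
  by move=> U SU; have [m [sm ->]] := cf_spec SU; apply: sm; exact: cc_in.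
have h2 : forall U V, S U -> S V -> Defs.subset V U -> PhiP p U (cf V ** ginv (cf U)).
  move=> U V SU SV sVU.
  have [a [sa ->]] := cf_spec SV; have [b [sb ->]] := cf_spec SU.
  have sU := gen_sub (fun y => (exists u, U u /\ y = gpow u p) \/
                  (exists u v, U u /\ U v /\ y = gcomm u v)).
  have ha := Phi_mono (p:=p) (fun x hx => sVU x (sa x hx)) (cc_coh (leq_maxl a b)).
  have hb := Phi_mono (p:=p) sb (cc_coh (leq_maxr a b)).
  exact: cos_trans sU (cos_sym sU ha) hb.
have h := hlim h1 h2 SU0.
have [n [sn en]] := cf_spec SU0.
apply: (cc_notP (n := n)); apply: hPhiP; rewrite -en; exact: h.
Qed.
End Chain.

Theorem lemma3p4 (A : group) (p : nat) (S : (A -> Prop) -> Prop) :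
  orientable_surface_group A ->
  prime p ->
  (forall U, S U -> NSp p U) ->
  (exists U, S U) ->
  directed S ->
  lim_H1_zero p S ->
  restriction_bijective p S.
Proof.
move=> [g [g1 [a [b [hrel huniv]]]]] pp hSN hS hdir hlim.
have cof : forall N, NSp p N -> exists U, S U /\ Defs.subset U N.
  move=> N hN; apply: NNPP => hnot.
  have [U0 [P [SU0 [sP [hPhiP hout]]]]] := QuotPart.ppart pp hS hN hnot.
  have hcode : forall U, S U -> exists L, forall x, U x <-> genL (g:=g) a b L x.
    by move=> U SU; exact: (NSp_code g1 hrel huniv (hSN U SU)).
  have hfin : forall U, S U -> exists (F : finType) (R : F -> A),
      forall u, U u -> exists j, PhiP p U (gmul u (ginv (R j)))
    by move=> U SU; exact: (NSp_fin g1 hrel huniv pp (hSN U SU)).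
  exact: (chain_false hdir hcode hfin SU0 sP hPhiP hout hlim).
split.
  move=> g1' g2' cg1 cg2 feq N hN.
  have [U [SU sUN]] := cof N hN.
  have sN := proj1 (proj1 hN).
  have h1 := cg1 N U hN (hSN U SU) sUN.
  have h2 := sUN _ (feq U SU).
  have h3 := cg2 N U hN (hSN U SU) sUN.
  exact: cos_trans sN (cos_sym sN h1) (cos_trans sN h2 h3).
move=> c cc.
have sel : forall N, exists U, NSp p N -> S U /\ Defs.subset U N.
  move=> N; case: (Classical_Prop.classic (NSp p N)) => [hN|hN].
    by have [U hU] := cof N hN; exists U.
  by case: hS => U _; exists U.
pose selU N := proj1_sig (constructive_indefinite_description _ (sel N)).
have hsel N : NSp p N -> S (selU N) /\ Defs.subset (selU N) N :=
  proj2_sig (constructive_indefinite_description _ (sel N)).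
exists (fun N => c (selU N)); split.
  move=> N M hN hM sMN.
  have [SUN sUN] := hsel N hN; have [SUM sUM] := hsel M hM.
  have [W [SW [sWM sWN]]] := hdir (selU M) (selU N) SUM SUN.
  have sN := proj1 (proj1 hN).
  have h1 := sUM _ (cc (selU M) W SUM SW sWM); have h2 := cc (selU N) W SUN SW sWN.
  have h1' := sMN _ h1; have h2' := sUN _ h2.
  exact: cos_trans sN (cos_sym sN h1') h2'.
move=> U SU; have [SS sS] := hsel U (hSN U SU).
exact: (cc U (selU U) SU SS sS).
Qed.
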